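(* Let $v>0$, $N\ge1$, and consider the coagulation process $CP(N)$ with single-coagulation rates $\psi(i,j)=(i+j)v$, started from the state $(N,0,\dots,0)$ (total dissipation). Then for all $t\ge0$, $1\le r\le N$ and $\eta=(n_1,\dots,n_N)\in\Omega_{r,N}$, $$\mathbb P(X_N^{(\rho)}(t)=\eta)=N!\,e^{-N(r-1)vt}\big(1-e^{-Nvt}\big)^{N-r}N^{-(N-r)}\prod_{k=1}^N\frac{k^{(k-1)n_k}}{(k!)^{n_k}n_k!}.$$ Equivalently, the distribution is Gibbsian with $C_N=N!$ and weights $a_{k,N}(t)=e^{-(N-k)vt}(1-e^{-Nvt})^{k-1}N^{-(k-1)}\frac{k^{k-1}}{k!}$.
   Context: $\Omega_N=\{\eta=(n_1,\dots,n_N):\sum_k kn_k=N\}$ and $\Omega_{r,N}=\{\eta\in\Omega_N:n_1+\dots+n_N=r\}$. $CP(N)$ is the continuous-time Markov chain on $\Omega_N$ in which any cluster of size $i$ and any other cluster of size $j$ merge into a cluster of size $i+j$ at rate $\psi(i,j)$; thus the transition $\eta\to\eta^{(i,j)}$ has rate $n_in_j\psi(i,j)$ for $i\ne j$ and $\frac{n_i(n_i-1)}2\psi(i,i)$ for $i=j$. $X_N^{(\rho)}(t)$ denotes the process at time $t$, $\rho$ the initial distribution (here the point mass at $(N,0,\dots,0)$). *)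

(* Defs.v *)
From Stdlib Require Import Reals Lra Lia Arith List.
Import ListNotations.
Open Scope R_scope.

(* A configuration eta = (n_1, ..., n_N) is encoded as a function nat -> nat,
   eta k = n_k = number of clusters of size k. *)
Definition state := nat -> nat.

Definition natsum (l : list nat) : nat := fold_right Nat.add 0%nat l.
Definition Rprod (l : list R) : R := fold_right Rmult 1 l.
Definition Rsum (l : list R) : R := fold_right Rplus 0 l.

Definition in_Omega (N : nat) (eta : state) : Prop :=
  eta 0%nat = 0%nat /\ (forall k, (N < k)%nat -> eta k = 0%nat) /\
  natsum (map (fun k => (k * eta k)%nat) (seq 1 N)) = N.

Definition in_Omega_r (N r : nat) (eta : state) : Prop :=
  in_Omega N eta /\ natsum (map eta (seq 1 N)) = r.

Definition ind (b : bool) : nat := if b then 1%nat else 0%nat.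

Definition coag (i j : nat) (eta : state) : state :=
  fun m => (eta m - ind (m =? i) - ind (m =? j) + ind (m =? i + j))%nat.

(* The (unique) predecessor eta' with coag i j eta' = eta (valid when eta_(i+j) >= 1). *)
Definition split (i j : nat) (eta : state) : state :=
  fun m => (eta m - ind (m =? i + j) + ind (m =? i) + ind (m =? j))%nat.

Definition psi (v : R) (i j : nat) : R := INR (i + j) * v.

Definition rate (v : R) (eta : state) (i j : nat) : R :=
  psi v i j * (if i =? j then INR (eta i) * INR (eta i - 1) / 2
               else INR (eta i) * INR (eta j)).

Definition pairs (N : nat) : list (nat * nat) :=
  flat_map (fun i => map (fun j => (i, j)) (seq i (N + 1 - i))) (seq 1 N).

Definition outflow (v : R) (N : nat) (eta : state) : R :=
  Rsum (map (fun ij => rate v eta (fst ij) (snd ij)) (pairs N)).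

Definition inflow (v : R) (N : nat) (q : state -> R) (eta : state) : R :=
  Rsum (map (fun ij =>
     if (1 <=? eta (fst ij + snd ij))%nat
     then q (split (fst ij) (snd ij) eta) *
          rate v (split (fst ij) (snd ij) eta) (fst ij) (snd ij)
     else 0) (pairs N)).

Definition init (N : nat) : state := fun m => if m =? 1 then N else 0%nat.

(* p is the law t |-> P(X_N(t) = .) of CP(N) started at init N:
   it solves the Kolmogorov forward equations on Omega_N for t > 0,
   is right-continuous at 0, and has initial value the point mass at init N. *)
Definition is_CP_law (v : R) (N : nat) (p : R -> state -> R) : Prop :=
  (forall eta, in_Omega N eta -> forall t, 0 < t ->
     derivable_pt_lim (fun s => p s eta) t
       (inflow v N (p t) eta - p t eta * outflow v N eta)) /\
  (forall eta, in_Omega N eta -> forall eps, 0 < eps -> exists delta, 0 < delta /\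
     forall s, 0 < s < delta -> Rabs (p s eta - p 0 eta) < eps) /\
  p 0 (init N) = 1 /\
  (forall eta, in_Omega N eta -> (exists k, eta k <> init N k) -> p 0 eta = 0).

Definition gibbs_formula (v : R) (N r : nat) (eta : state) (t : R) : R :=
  INR (fact N) * exp (- INR N * INR (r - 1) * v * t) *
  (1 - exp (- INR N * v * t)) ^ (N - r) / INR N ^ (N - r) *
  Rprod (map (fun k => INR k ^ ((k - 1) * eta k) /
                       (INR (fact k) ^ (eta k) * INR (fact (eta k)))) (seq 1 N)).

(* Main.v *)
Require Import Defs.
From Stdlib Require Import Reals Lra Lia Arith List.
From Stdlib Require Import FunctionalExtensionality.
Import ListNotations.
Import Defs.
Open Scope R_scope.

Lemma Rsum_app l1 l2 : Rsum (l1 ++ l2) = Rsum l1 + Rsum l2.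
Proof. induction l1; simpl; [ring| rewrite IHl1; ring]. Qed.

Lemma Rprod_app l1 l2 : Rprod (l1 ++ l2) = Rprod l1 * Rprod l2.
Proof. induction l1; simpl; [ring| rewrite IHl1; ring]. Qed.

Definition sr (f : nat -> R) (a n : nat) : R := Rsum (map f (seq a n)).

Lemma Rsum_ext {A} (f g : A -> R) l : (forall x, In x l -> f x = g x) ->
  Rsum (map f l) = Rsum (map g l).
Proof. intros H; rewrite (map_ext_in f g l H); reflexivity. Qed.

Lemma Rprod_ext {A} (f g : A -> R) l : (forall x, In x l -> f x = g x) ->
  Rprod (map f l) = Rprod (map g l).
Proof. intros H; rewrite (map_ext_in f g l H); reflexivity. Qed.

Lemma Rsum_plus {A} (f g : A -> R) l :
  Rsum (map (fun x => f x + g x) l) = Rsum (map f l) + Rsum (map g l).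
Proof. induction l; simpl; [ring| rewrite IHl; ring]. Qed.

Lemma Rsum_minus {A} (f g : A -> R) l :
  Rsum (map (fun x => f x - g x) l) = Rsum (map f l) - Rsum (map g l).
Proof. induction l; simpl; [ring| rewrite IHl; ring]. Qed.

Lemma Rsum_scal {A} (c : R) (f : A -> R) l :
  Rsum (map (fun x => c * f x) l) = c * Rsum (map f l).
Proof. induction l; simpl; [ring| rewrite IHl; ring]. Qed.

Lemma Rsum_zero {A} (f : A -> R) l : (forall x, In x l -> f x = 0) -> Rsum (map f l) = 0.
Proof. induction l; simpl; intros H; [ring|]. rewrite H by auto. rewrite IHl by auto. ring. Qed.

Lemma Rprod_mult {A} (f g : A -> R) l :
  Rprod (map (fun x => f x * g x) l) = Rprod (map f l) * Rprod (map g l).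
Proof. induction l; simpl; [ring| rewrite IHl; ring]. Qed.

Lemma Rsum_single (f : nat -> R) l a : NoDup l -> In a l ->
  Rsum (map (fun k => if k =? a then f k else 0) l) = f a.
Proof.
  induction l as [|b l IH]; simpl; intros Hn Hi; [contradiction|].
  inversion Hn; subst.
  destruct Hi as [<-|Hi].
  - rewrite Nat.eqb_refl. rewrite Rsum_zero; [ring|].
    intros x Hx. destruct (Nat.eqb_spec x b); [subst; contradiction| reflexivity].
  - destruct (Nat.eqb_spec b a); [subst; contradiction|]. rewrite IH by auto. ring.
Qed.

Lemma Rprod_single (c : R) l a : NoDup l -> In a l ->
  Rprod (map (fun k => if k =? a then c else 1) l) = c.
Proof.
  induction l as [|b l IH]; simpl; intros Hn Hi; [contradiction|].
  inversion Hn; subst.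
  destruct Hi as [<-|Hi].
  - rewrite Nat.eqb_refl.
    assert (E: Rprod (map (fun k => if k =? b then c else 1) l) = 1).
    { clear IH H2 Hn. revert H1. induction l as [|y l IHl]; simpl; intros H1; [reflexivity|].
      destruct (Nat.eqb_spec y b); [subst; exfalso; apply H1; left; reflexivity|].
      rewrite IHl; [ring| tauto]. }
    rewrite E; ring.
  - destruct (Nat.eqb_spec b a); [subst; contradiction|]. rewrite IH by auto. ring.
Qed.

Lemma sr_S f a n : sr f a (S n) = sr f a n + f (a + n)%nat.
Proof. unfold sr. rewrite seq_S, map_app, Rsum_app. simpl. ring. Qed.

Lemma sr_cons f a n : sr f a (S n) = f a + sr f (S a) n.
Proof. reflexivity. Qed.

Lemma sr_shift f a n : sr f (S a) n = sr (fun k => f (S k)) a n.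
Proof. unfold sr. rewrite <- seq_shift, map_map. reflexivity. Qed.

Lemma sr_ext f g a n : (forall k, (a <= k < a + n)%nat -> f k = g k) -> sr f a n = sr g a n.
Proof. intros H. apply Rsum_ext. intros x Hx. apply in_seq in Hx. auto. Qed.

Lemma sr_plus f g a n : sr (fun k => f k + g k) a n = sr f a n + sr g a n.
Proof. apply Rsum_plus. Qed.
Lemma sr_minus f g a n : sr (fun k => f k - g k) a n = sr f a n - sr g a n.
Proof. apply Rsum_minus. Qed.
Lemma sr_scal c f a n : sr (fun k => c * f k) a n = c * sr f a n.
Proof. apply Rsum_scal. Qed.
Lemma sr_zero f a n : (forall k, (a <= k < a + n)%nat -> f k = 0) -> sr f a n = 0.
Proof. intros H. apply Rsum_zero. intros x Hx; apply in_seq in Hx; auto. Qed.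
Lemma sr_single f a n b : (a <= b < a + n)%nat ->
  sr (fun k => if k =? b then f k else 0) a n = f b.
Proof. intros H. apply Rsum_single; [apply seq_NoDup| apply in_seq; auto]. Qed.

Lemma sr_mult f g a n b m :
  sr f a n * sr g b m = sr (fun i => sr (fun j => f i * g j) b m) a n.
Proof.
  unfold sr. induction (seq a n); simpl; [ring|]. rewrite <- IHl.
  rewrite Rsum_scal. ring.
Qed.

Lemma sr_swap (F : nat -> nat -> R) a n b m :
  sr (fun i => sr (fun j => F i j) b m) a n = sr (fun j => sr (fun i => F i j) a n) b m.
Proof.
  revert a. induction n; intros a.
  - unfold sr at 1. simpl. symmetry. apply sr_zero. intros; reflexivity.
  - rewrite sr_cons, IHn. unfold sr at 1 2. rewrite <- Rsum_plus. reflexivity.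
Qed.

Lemma dpl_ext f g x l l' : (forall y, f y = g y) -> l = l' ->
  derivable_pt_lim f x l -> derivable_pt_lim g x l'.
Proof.
  intros H <- D eps He. destruct (D eps He) as [d Hd]. exists d.
  intros h Hh Hl. rewrite <- !H. auto.
Qed.

Lemma dpl_plus f g x a b : derivable_pt_lim f x a -> derivable_pt_lim g x b ->
  derivable_pt_lim (fun y => f y + g y) x (a + b).
Proof. intros; exact (derivable_pt_lim_plus f g x a b H H0). Qed.
Lemma dpl_minus f g x a b : derivable_pt_lim f x a -> derivable_pt_lim g x b ->
  derivable_pt_lim (fun y => f y - g y) x (a - b).
Proof. intros; exact (derivable_pt_lim_minus f g x a b H H0). Qed.
Lemma dpl_mult f g x a b : derivable_pt_lim f x a -> derivable_pt_lim g x b ->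
  derivable_pt_lim (fun y => f y * g y) x (a * g x + f x * b).
Proof. intros; exact (derivable_pt_lim_mult f g x a b H H0). Qed.
Lemma dpl_const c x : derivable_pt_lim (fun _ => c) x 0.
Proof. exact (derivable_pt_lim_const c x). Qed.
Lemma dpl_scal c f x a : derivable_pt_lim f x a ->
  derivable_pt_lim (fun y => c * f y) x (c * a).
Proof. intros; exact (derivable_pt_lim_scal f c x a H). Qed.

Lemma dpl_powshift c n x :
  derivable_pt_lim (fun y => (y + c) ^ n) x (INR n * (x + c) ^ pred n).
Proof.
  assert (H := derivable_pt_lim_comp (fun y => y + c) (fun y => y ^ n) x 1 (INR n * (x + c) ^ pred n)).
  eapply dpl_ext; [| | apply H].
  - intros; reflexivity.
  - ring.
  - apply dpl_ext with (f := fun y => y + c) (l := 1 + 0); [reflexivity| ring|].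
    apply dpl_plus; [apply derivable_pt_lim_id| apply dpl_const].
  - apply derivable_pt_lim_pow.
Qed.

Lemma dpl_Rsum {A} (F : A -> R -> R) (F' : A -> R) l x :
  (forall a, In a l -> derivable_pt_lim (F a) x (F' a)) ->
  derivable_pt_lim (fun y => Rsum (map (fun a => F a y) l)) x (Rsum (map F' l)).
Proof.
  induction l; simpl; intros H.
  - apply dpl_const.
  - apply dpl_plus; auto.
Qed.

Lemma deriv0_const f : (forall y, derivable_pt_lim f y 0) -> forall a b, a <= b -> f a = f b.
Proof.
  intros H a b Hab.
  assert (pr : forall x, a < x < b -> derivable_pt f x) by (intros x _; exists 0; apply H).
  assert (C := null_derivative_loc f a b pr).
  symmetry. apply C; [| | lra].
  - intros x _. apply derivable_continuous_pt. exists 0; apply H.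
  - intros x P. apply derive_pt_eq_0. apply H.
Qed.

Lemma deriv0_const' f : (forall y, derivable_pt_lim f y 0) -> forall a b, f a = f b.
Proof.
  intros H a b. destruct (Rle_dec a b).
  - apply deriv0_const; auto.
  - symmetry; apply deriv0_const; auto; lra.
Qed.

Definition w (n k : nat) : R := (-1) ^ k / (INR (fact k) * INR (fact (n - k))).
Definition E (n : nat) (f : nat -> R) : R := sr (fun k => w n k * f k) 0 (S n).

Lemma fact_pos_R n : 0 < INR (fact n).
Proof. apply lt_0_INR. apply lt_O_fact. Qed.

Lemma coef1 n : INR (S n) * w (S n) 0 = w n 0.
Proof.
  unfold w. rewrite !Nat.sub_0_r. rewrite fact_simpl, mult_INR.
  assert (H := fact_pos_R n). assert (0 < INR (S n)) by (apply lt_0_INR; lia).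
  rewrite pow_O. change (INR (fact 0)) with 1. field. lra.
Qed.

Lemma coef2 n k : (k < n)%nat -> INR (S n) * w (S n) (S k) = w n (S k) - w n k.
Proof.
  intros Hk. unfold w.
  replace (S n - S k)%nat with (n - k)%nat by lia.
  replace (n - k)%nat with (S (n - S k)) by lia.
  rewrite !fact_simpl, !mult_INR.
  assert (H1 := fact_pos_R k). assert (H2 := fact_pos_R (n - S k)).
  replace (INR (S (n - S k))) with (INR n - INR k) by (rewrite S_INR, minus_INR by lia; rewrite S_INR; ring).
  assert (INR k < INR n) by (apply lt_INR; lia).
  rewrite !S_INR. rewrite <- !tech_pow_Rmult. assert (H0 := pos_INR k). field. repeat split; lra.
Qed.

Lemma coef3 n : INR (S n) * w (S n) (S n) = - w n n.
Proof.
  unfold w. rewrite !Nat.sub_diag. rewrite fact_simpl, mult_INR.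
  assert (H1 := fact_pos_R n). assert (0 < INR (S n)) by (apply lt_0_INR; lia).
  change (INR (fact 0)) with 1. rewrite <- tech_pow_Rmult. field. lra.
Qed.

Lemma FD1 n f : INR (S n) * E (S n) f = E n (fun k => f k - f (S k)).
Proof.
  unfold E. rewrite sr_cons, sr_shift.
  transitivity (INR (S n) * w (S n) 0 * f 0%nat +
     sr (fun k => (if k <? n then w n (S k) else 0) * f (S k) - w n k * f (S k)) 0 (S n)).
  - rewrite Rmult_plus_distr_l, <- sr_scal. f_equal; [ring|].
    apply sr_ext. intros k Hk. destruct (Nat.ltb_spec k n).
    + rewrite <- Rmult_assoc, coef2 by lia. ring.
    + assert (k = n) by lia. subst. rewrite <- Rmult_assoc, coef3. ring.
  - rewrite sr_minus, sr_S. rewrite Nat.ltb_irrefl. simpl (0 + n)%nat.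
    rewrite coef1.
    transitivity (sr (fun k => w n k * f k) 0 (S n) - sr (fun k => w n k * f (S k)) 0 (S n)).
    + rewrite (sr_cons (fun k => w n k * f k)), (sr_shift (fun k => w n k * f k)).
      rewrite (sr_ext (fun k => (if k <? n then w n (S k) else 0) * f (S k)) (fun k => w n (S k) * f (S k))).
      * ring.
      * intros k Hk. destruct (Nat.ltb_spec k n); [reflexivity| lia].
    + rewrite <- sr_minus. apply sr_ext. intros; ring.
Qed.

Lemma E_ext n f g : (forall k, (k <= n)%nat -> f k = g k) -> E n f = E n g.
Proof. intros H. unfold E. apply sr_ext. intros k Hk. rewrite H by lia. reflexivity. Qed.

Lemma E_minus n f g : E n (fun k => f k - g k) = E n f - E n g.
Proof. unfold E. rewrite <- sr_minus. apply sr_ext; intros; ring. Qed.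

Lemma FD2 n : forall j x, (j < n)%nat -> E n (fun k => (x + INR k) ^ j) = 0.
Proof.
  induction n as [|n IH]; intros j x Hj; [lia|].
  assert (HS : 0 < INR (S n)) by (apply lt_0_INR; lia).
  apply Rmult_eq_reg_l with (INR (S n)); [|lra]. rewrite Rmult_0_r, FD1.
  rewrite (E_ext n _ (fun k => (x + INR k) ^ j - ((x + 1) + INR k) ^ j)).
  2:{ intros k _. rewrite S_INR. f_equal. f_equal. ring. }
  rewrite E_minus.
  destruct (Nat.ltb_spec j n).
  - rewrite !IH by auto. ring.
  - assert (j = n) by lia. subst j.
    set (h := fun y => E n (fun k => (y + INR k) ^ n)).
    assert (Hd : forall y, derivable_pt_lim h y 0).
    { intros y. unfold h, E, sr.
      eapply dpl_ext with (l := Rsum (map (fun k => w n k * (INR n * (y + INR k) ^ pred n)) (seq 0 (S n)))).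
      - intros z. reflexivity.
      - destruct n as [|n'].
        + simpl. ring.
        + replace (Rsum (map (fun k => w (S n') k * (INR (S n') * (y + INR k) ^ pred (S n'))) (seq 0 (S (S n')))))
            with (INR (S n') * E (S n') (fun k => (y + INR k) ^ n')).
          * rewrite IH by lia. ring.
          * unfold E, sr. rewrite <- Rsum_scal. apply Rsum_ext. intros; simpl pred; ring.
      - apply (dpl_Rsum (fun k z => w n k * (z + INR k) ^ n)). intros k _.
        apply dpl_scal. apply dpl_powshift. }
    change (h x - h (x + 1) = 0).
    rewrite (deriv0_const' h Hd x (x + 1)). ring.
Qed.

Definition ak (k : nat) : R := (INR k + 1) ^ (k - 1) / INR (fact k).

Lemma INR_sub a b : (b <= a)%nat -> INR (a - b) = INR a - INR b.
Proof. apply minus_INR. Qed.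


Lemma Abel n : forall Y,
  sr (fun k => ak k * (Y - INR k) ^ (n - k) / INR (fact (n - k))) 0 (S n) = (1 + Y) ^ n / INR (fact n).
Proof.
  induction n as [|n IH]; intros Y.
  - unfold sr. simpl. unfold ak. simpl. field.
  - set (F := fun y => sr (fun k => ak k * (y - INR k) ^ (S n - k) / INR (fact (S n - k))) 0 (S (S n))
                     - (1 + y) ^ S n / INR (fact (S n))).
    assert (Hd : forall y, derivable_pt_lim F y 0).
    { intros y. unfold F, sr.
      apply dpl_ext with (f := fun y => Rsum (map (fun k => ak k * (y - INR k) ^ (S n - k) / INR (fact (S n - k))) (seq 0 (S (S n))))
                     - (1 + y) ^ S n / INR (fact (S n)))
        (l := Rsum (map (fun k => ak k * (INR (S n - k) * (y - INR k) ^ pred (S n - k)) / INR (fact (S n - k))) (seq 0 (S (S n))))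
              - INR (S n) * (y + 1) ^ pred (S n) / INR (fact (S n))).
      - intros; reflexivity.
      - fold (sr (fun k => ak k * (INR (S n - k) * (y - INR k) ^ pred (S n - k)) / INR (fact (S n - k))) 0 (S (S n))).
        rewrite (sr_ext _ (fun k => if k <=? n then ak k * (y - INR k) ^ (n - k) / INR (fact (n - k)) else 0)).
        + rewrite sr_S. replace ((0 + S n <=? n)%nat) with false by (symmetry; apply Nat.leb_gt; lia).
          rewrite (sr_ext _ (fun k => ak k * (y - INR k) ^ (n - k) / INR (fact (n - k)))).
          * rewrite IH. simpl pred. rewrite fact_simpl, mult_INR.
            assert (H1 := fact_pos_R n). assert (0 < INR (S n)) by (apply lt_0_INR; lia).
            rewrite (Rplus_comm y 1). field. lra.
          * intros k Hk. destruct (Nat.leb_spec k n); [reflexivity| lia].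
        + intros k Hk. destruct (Nat.leb_spec k n).
          * replace (S n - k)%nat with (S (n - k)) by lia. simpl pred.
            rewrite fact_simpl, mult_INR.
            assert (H1 := fact_pos_R (n - k)). assert (0 < INR (S (n - k))) by (apply lt_0_INR; lia).
            field. lra.
          * replace (S n - k)%nat with 0%nat by lia. simpl INR. unfold Rdiv. ring.
      - apply dpl_minus.
        + apply (dpl_Rsum (fun k y => ak k * (y - INR k) ^ (S n - k) / INR (fact (S n - k)))).
          intros k _. unfold Rdiv.
          apply dpl_ext with (f := fun y => (ak k * / INR (fact (S n - k))) * (y + - INR k) ^ (S n - k))
              (l := (ak k * / INR (fact (S n - k))) * (INR (S n - k) * (y + - INR k) ^ pred (S n - k))).
          * intros; unfold Rminus; ring.
          * unfold Rminus; ring.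
          * apply dpl_scal, dpl_powshift.
        + unfold Rdiv.
          apply dpl_ext with (f := fun y => (/ INR (fact (S n))) * (y + 1) ^ (S n))
              (l := (/ INR (fact (S n))) * (INR (S n) * (y + 1) ^ pred (S n))).
          * intros; rewrite (Rplus_comm 1); ring.
          * ring.
          * apply dpl_scal, dpl_powshift. }
    assert (HF : F (-1) = 0).
    { unfold F. replace (1 + -1) with 0 by ring. rewrite pow_i by lia. unfold Rdiv at 2. rewrite Rmult_0_l, Rminus_0_r.
      transitivity ((-1) ^ S n * E (S n) (fun k => (1 + INR k) ^ n)).
      - unfold E. rewrite <- sr_scal. apply sr_ext. intros k Hk. unfold ak, w.
        replace (-1 - INR k) with ((-1) * (INR k + 1)) by ring.
        rewrite Rpow_mult_distr.
        assert (Hp : (-1) ^ (S n - k) = (-1) ^ S n * (-1) ^ k).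
        { replace (S n) with ((S n - k) + k)%nat at 2 by lia. rewrite pow_add.
          rewrite Rmult_assoc, <- pow_add. replace (k + k)%nat with (2 * k)%nat by lia.
          rewrite pow_mult. replace ((-1) ^ 2) with 1 by ring. rewrite pow1. ring. }
        assert (Hq : (INR k + 1) ^ (k - 1) * (INR k + 1) ^ (S n - k) = (1 + INR k) ^ n).
        { destruct k as [|k'].
          - simpl INR. rewrite Rplus_0_l, !pow1. replace (1 + 0) with 1 by ring. rewrite pow1. ring.
          - rewrite <- pow_add. replace (S k' - 1 + (S n - S k'))%nat with n by lia. f_equal. ring. }
        rewrite Hp. rewrite <- Hq.
        assert (H1 := fact_pos_R k). assert (H2 := fact_pos_R (S n - k)).
        field. lra.
      - rewrite FD2 by lia. ring. }
    assert (HY := deriv0_const' F Hd Y (-1)). rewrite HF in HY.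
    unfold F in HY. lra.
Qed.

Lemma Bsum n : (1 <= n)%nat ->
  sr (fun k => ak k * ak (n - k)) 0 (S n) = 2 * (INR n + 2) ^ (n - 1) / INR (fact n).
Proof.
  intros Hn.
  assert (A1 := Abel n (INR n + 1)).
  assert (A2 := Abel (n - 1) (INR n + 1)).
  rewrite (sr_ext _ (fun k => ak k * ak (n - k) + INR (n - k) * ak k * ak (n - k))) in A1.
  2:{ intros k Hk. unfold ak. rewrite (INR_sub n k) by lia.
      replace (INR n + 1 - INR k) with (INR (n - k) + 1) by (rewrite INR_sub by lia; ring).
      rewrite INR_sub by lia.
      destruct (Nat.eq_dec k n).
      - subst. rewrite Nat.sub_diag. simpl. field. apply INR_fact_neq_0.
      - replace (n - k)%nat with (S (n - k - 1)) by lia. simpl pow.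
        replace (n - k - 1 + 1)%nat with (n - k)%nat by lia. rewrite <- INR_sub by lia.
        replace (S (n - k - 1)) with (n - k)%nat by lia. simpl. 
        assert (H1 := fact_pos_R k). assert (H2 := fact_pos_R (n - k)).
        rewrite (Rmult_comm (INR (n - k) + 1)).
        rewrite Nat.sub_0_r. field. lra. }
  rewrite sr_plus in A1.
  assert (E2 : sr (fun k => INR (n - k) * ak k * ak (n - k)) 0 (S n) = (1 + (INR n + 1)) ^ (n - 1) / INR (fact (n - 1))).
  { rewrite <- A2. replace (S n) with (S (S (n - 1))) at 1 by lia. rewrite sr_S.
    replace (INR (n - (0 + S (n - 1)))) with 0 by (replace (n - (0 + S (n - 1)))%nat with 0%nat by lia; reflexivity).
    rewrite Rmult_0_l, Rmult_0_l, Rplus_0_r.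
    replace (S (n - 1)) with n at 1 by lia.
    replace (S (n - 1)) with n at 1 by lia.
    apply sr_ext. intros k Hk. unfold ak.
    replace (n - k)%nat with (S (n - 1 - k)) by lia.
    rewrite fact_simpl, mult_INR. simpl Nat.sub.
    replace (INR n + 1 - INR k) with (INR (S (n - 1 - k)) + 1).
    2:{ rewrite S_INR, !INR_sub by lia. simpl INR. ring. }
    rewrite Nat.sub_0_r.
    assert (H1 := fact_pos_R k). assert (H2 := fact_pos_R (n - 1 - k)).
    assert (0 < INR (S (n - 1 - k))) by (apply lt_0_INR; lia).
    field. lra. }
  rewrite E2 in A1.
  destruct n as [|n']; [lia|]. simpl Nat.sub in *. rewrite Nat.sub_0_r in *.
  rewrite fact_simpl, mult_INR in *. rewrite <- tech_pow_Rmult in A1.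
  assert (H1 := fact_pos_R n'). assert (0 < INR (S n')) by (apply lt_0_INR; lia).
  replace (1 + (INR (S n') + 1)) with (INR (S n') + 2) in * by ring.
  apply Rmult_eq_reg_l with (INR (S n') * INR (fact n')); [|apply Rmult_integral_contrapositive; split; lra].
  replace (INR (S n') * INR (fact n') * (2 * (INR (S n') + 2) ^ n' / (INR (S n') * INR (fact n'))))
    with (2 * (INR (S n') + 2) ^ n') by (field; split; lra).
  match type of A1 with ?S + _ = _ => set (SS := S) in * end.
  fold SS.
  assert (HS : SS = (INR (S n') + 2) * (INR (S n') + 2) ^ n' / (INR (S n') * INR (fact n')) -
             (INR (S n') + 2) ^ n' / INR (fact n')) by lra.
  rewrite HS. field. lra.
Qed.

Definition ck (k : nat) : R := INR k ^ (k - 1) / INR (fact k).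

Lemma ck_S k : ck (S k) = ak k.
Proof.
  unfold ck, ak. rewrite S_INR. destruct k as [|k].
  - simpl. field.
  - rewrite fact_simpl, mult_INR. replace (S (S k) - 1)%nat with (S (S k - 1)) by lia.
    rewrite <- tech_pow_Rmult. rewrite <- S_INR.
    assert (H1 := fact_pos_R (S k)). assert (0 < INR (S (S k))) by (apply lt_0_INR; lia).
    rewrite S_INR. rewrite S_INR in H. field. lra.
Qed.

Lemma ck_pos k : (1 <= k)%nat -> 0 < ck k.
Proof.
  intros Hk. unfold ck. apply Rdiv_lt_0_compat; [|apply fact_pos_R].
  apply pow_lt. apply lt_0_INR; lia.
Qed.

Lemma PM m : (1 <= m)%nat ->
  INR m / ck m * sr (fun i => ck i * ck (m - i)) 1 (m - 1) = 2 * (INR m - 1).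
Proof.
  intros Hm. destruct m as [|[|[|n]]]; [lia| | |].
  - unfold sr. simpl. ring.
  - unfold sr, ck. simpl. field.
  - replace (S (S (S n)) - 1)%nat with (S (S n)) by lia.
    rewrite sr_shift.
    rewrite (sr_ext _ (fun k => ak k * ak (S n - k))).
    2:{ intros k Hk. rewrite ck_S. replace (S (S (S n)) - S k)%nat with (S (S n - k)) by lia.
        rewrite ck_S. reflexivity. }
    rewrite Bsum by lia. rewrite !ck_S. unfold ak.
    replace (S n - 1)%nat with n by lia. 
    rewrite !fact_simpl, !mult_INR. replace (S (S n) - 1)%nat with (S n) by lia. rewrite <- tech_pow_Rmult.
    rewrite !S_INR.
    assert (H1 := fact_pos_R n). assert (H2 := pos_INR n).
    replace (INR n + 1 + 2) with (INR n + 1 + 1 + 1) by ring. field. repeat split; try lra.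
    apply pow_nonzero. lra.
Qed.

Lemma INR_natsum {A} (f : A -> nat) l : INR (natsum (map f l)) = Rsum (map (fun x => INR (f x)) l).
Proof. induction l; simpl; [reflexivity|]. rewrite plus_INR, IHl. reflexivity. Qed.

Lemma Omega_R N eta : in_Omega N eta -> sr (fun k => INR k * INR (eta k)) 1 N = INR N.
Proof.
  intros [_ [_ H]]. rewrite <- H at 2. rewrite INR_natsum. unfold sr. apply Rsum_ext.
  intros; rewrite mult_INR; reflexivity.
Qed.

Lemma cnt_R N r eta : in_Omega_r N r eta -> sr (fun k => INR (eta k)) 1 N = INR r.
Proof. intros [_ H]. rewrite <- H, INR_natsum. reflexivity. Qed.

Lemma pairs_sum (g : nat -> nat -> R) N :
  Rsum (map (fun ij => g (fst ij) (snd ij)) (pairs N)) =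
  sr (fun i => sr (fun j => g i j) i (N + 1 - i)) 1 N.
Proof.
  unfold pairs, sr. induction (seq 1 N) as [|i L IH]; simpl; [reflexivity|].
  rewrite map_app, Rsum_app, IH, map_map. reflexivity.
Qed.

Lemma In_pairs N i j : In (i, j) (pairs N) -> (1 <= i <= j /\ j <= N)%nat.
Proof.
  unfold pairs. intros H. apply in_flat_map in H. destruct H as [x [Hx Hy]].
  apply in_map_iff in Hy. destruct Hy as [y [Hy Hy']]. inversion Hy; subst.
  apply in_seq in Hx. apply in_seq in Hy'. lia.
Qed.

Lemma sym_sum (f : nat -> nat -> R) N : (forall i j, f i j = f j i) ->
  sr (fun i => sr (fun j => (if i =? j then /2 else 1) * f i j) i (N + 1 - i)) 1 N =
  / 2 * sr (fun i => sr (fun j => f i j) 1 N) 1 N.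
Proof.
  intros Hs. induction N as [|N IH].
  - unfold sr; simpl; ring.
  - rewrite sr_S.
    rewrite (sr_ext (fun i => sr (fun j => (if i =? j then /2 else 1) * f i j) i (S N + 1 - i))
               (fun i => sr (fun j => (if i =? j then /2 else 1) * f i j) i (N + 1 - i) + f i (S N))).
    2:{ intros i Hi. replace (S N + 1 - i)%nat with (S (N + 1 - i)) by lia. rewrite sr_S.
        replace (i + (N + 1 - i))%nat with (S N) by lia.
        destruct (Nat.eqb_spec i (S N)); [lia|]. ring. }
    rewrite sr_plus, IH.
    replace (1 + N)%nat with (S N) by lia.
    replace (S N + 1 - S N)%nat with 1%nat by lia.
    assert (Hl : forall h, sr h (S N) 1 = h (S N)) by (intros; unfold sr; simpl; ring). rewrite Hl, Nat.eqb_refl.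
    rewrite (sr_S (fun i => sr (fun j => f i j) 1 (S N))).
    rewrite (sr_ext (fun i => sr (fun j => f i j) 1 (S N)) (fun i => sr (fun j => f i j) 1 N + f i (S N))).
    2:{ intros i Hi. rewrite sr_S. replace (1 + N)%nat with (S N) by lia. reflexivity. }
    rewrite sr_plus, sr_S. replace (1 + N)%nat with (S N) by lia.
    rewrite (sr_ext (fun j => f (S N) j) (fun j => f j (S N))) by (intros; apply Hs).
    field.
Qed.

Lemma AD (g : nat -> nat -> R) N :
  sr (fun i => sr (fun j => if (i + j <=? N)%nat then g i j else 0) 1 N) 1 N =
  sr (fun m => sr (fun i => g i (m - i)%nat) 1 (m - 1)) 1 N.
Proof.
  induction N as [|N IH]; [reflexivity|].
  rewrite (sr_ext (fun i => sr (fun j => if (i + j <=? S N)%nat then g i j else 0) 1 (S N))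
     (fun i => sr (fun j => if (i + j <=? N)%nat then g i j else 0) 1 (S N) +
               sr (fun j => if (j =? S N - i)%nat then g i j else 0) 1 (S N))).
  2:{ intros i Hi. rewrite <- sr_plus. apply sr_ext. intros j Hj.
      destruct (Nat.leb_spec (i + j) (S N)), (Nat.leb_spec (i + j) N), (Nat.eqb_spec j (S N - i));
        try lia; ring. }
  rewrite sr_plus. rewrite sr_S.
  rewrite (sr_zero (fun j => if (0 + S N + j <=? N)%nat then g (1 + N)%nat j else 0)).
  2:{ intros j Hj. destruct (_ <=? _)%nat eqn:E; [apply Nat.leb_le in E; lia | reflexivity]. }
  rewrite (sr_ext (fun i => sr (fun j => if (i + j <=? N)%nat then g i j else 0) 1 (S N))
      (fun i => sr (fun j => if (i + j <=? N)%nat then g i j else 0) 1 N)).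
  2:{ intros i Hi. rewrite sr_S. destruct (_ <=? _)%nat eqn:E; [apply Nat.leb_le in E; lia | ring]. }
  rewrite IH. rewrite sr_S.
  rewrite (sr_zero (fun j => if (j =? S N - (1 + N))%nat then g (1 + N)%nat j else 0)).
  2:{ intros j Hj. destruct (_ =? _)%nat eqn:E; [apply Nat.eqb_eq in E; lia | reflexivity]. }
  rewrite (sr_ext (fun i => sr (fun j => if (j =? S N - i)%nat then g i j else 0) 1 (S N))
      (fun i => g i (S N - i)%nat)).
  2:{ intros i Hi. apply sr_single. lia. }
  rewrite (sr_S (fun m => sr (fun i => g i (m - i)%nat) 1 (m - 1))).
  replace (1 + N - 1)%nat with N by lia. replace (1 + N)%nat with (S N) by lia.
  ring.
Qed.

Lemma sr_sum_square (a b : nat -> R) N :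
  sr (fun i => sr (fun j => a i * b j) 1 N) 1 N = sr a 1 N * sr b 1 N.
Proof. rewrite sr_mult. reflexivity. Qed.

Lemma K1 v N r eta : in_Omega_r N r eta ->
  outflow v N eta = v * INR N * INR r - v * INR N.
Proof.
  intros Hr. assert (HO := Omega_R N eta (proj1 Hr)). assert (HC := cnt_R N r eta Hr).
  unfold outflow.
  set (Rr := fun i j => INR (i + j) * v * (if i =? j then INR (eta i) * INR (eta i - 1) else INR (eta i) * INR (eta j))).
  rewrite (pairs_sum (rate v eta)).
  rewrite (sr_ext _ (fun i => sr (fun j => (if i =? j then /2 else 1) * Rr i j) i (N + 1 - i))).
  2:{ intros i _. apply sr_ext. intros j _. unfold rate, Rr, psi.
      destruct (Nat.eqb_spec i j); unfold Rdiv; ring. }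
  rewrite sym_sum.
  2:{ intros i j. unfold Rr. destruct (Nat.eqb_spec i j).
      - subst; rewrite Nat.eqb_refl; reflexivity.
      - rewrite (proj2 (Nat.eqb_neq j i)) by auto. rewrite Nat.add_comm. ring. }
  rewrite (sr_ext _ (fun i => sr (fun j => INR i * INR (eta i) * (v * INR (eta j)) + INR (eta i) * (v * (INR j * INR (eta j)))) 1 N
        - sr (fun j => if j =? i then 2 * v * (INR i * INR (eta i)) else 0) 1 N)).
  2:{ intros i Hi. rewrite <- sr_minus. apply sr_ext. intros j Hj. unfold Rr.
      rewrite plus_INR. rewrite (Nat.eqb_sym j i). destruct (Nat.eqb_spec i j).
      - subst j. destruct (eta i) as [|e].
        + simpl. ring.
        + replace (S e - 1)%nat with e by lia. rewrite S_INR. ring.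
      - ring. }
  rewrite sr_minus.
  rewrite (sr_ext (fun i => sr (fun j => if j =? i then 2 * v * (INR i * INR (eta i)) else 0) 1 N)
             (fun i => 2 * v * (INR i * INR (eta i)))).
  2:{ intros i Hi. apply (sr_single (fun _ => 2 * v * (INR i * INR (eta i)))). lia. }
  rewrite sr_scal, HO.
  rewrite (sr_ext _ (fun i => sr (fun j => INR i * INR (eta i) * (v * INR (eta j))) 1 N +
                       sr (fun j => INR (eta i) * (v * (INR j * INR (eta j)))) 1 N))
    by (intros; apply sr_plus).
  rewrite sr_plus, !sr_sum_square, HO, sr_scal, sr_scal, HC, HO. field.
Qed.

Definition hh (k n : nat) : R := INR k ^ ((k - 1) * n) / (INR (fact k) ^ n * INR (fact n)).
Definition PP N (eta : state) : R := Rprod (map (fun k => hh k (eta k)) (seq 1 N)).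
Definition W (eta : state) (i j : nat) : R :=
  INR (i + j) * ck i * ck j / ck (i + j) * INR (eta (i + j)%nat).

Lemma hh_S k n : hh k (S n) = hh k n * ck k / INR (S n).
Proof.
  unfold hh, ck. rewrite Nat.mul_succ_r, pow_add, fact_simpl, mult_INR.
  rewrite <- tech_pow_Rmult.
  assert (H1 := INR_fact_neq_0 k). assert (H2 := INR_fact_neq_0 n).
  assert (0 < INR (S n)) by (apply lt_0_INR; lia).
  field. repeat split; try lra. apply pow_nonzero. auto.
Qed.

Lemma hh_pred k e : (1 <= k)%nat -> hh k e = hh k (S e) * INR (S e) / ck k.
Proof.
  intros Hk. rewrite hh_S. assert (H := ck_pos k Hk).
  assert (0 < INR (S e)) by (apply lt_0_INR; lia). field. lra.
Qed.

Lemma termT v N r eta (Q : state -> R) Gc i j : in_Omega_r N r eta -> (1 <= i <= j)%nat ->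
  ((1 <= eta (i + j)%nat)%nat -> Q (split i j eta) = Gc * PP N (split i j eta)) ->
  (if (1 <=? eta (i + j)%nat)%nat then Q (split i j eta) * rate v (split i j eta) i j else 0) =
  Gc * PP N eta * v * ((if i =? j then /2 else 1) * W eta i j).
Proof.
  intros [[H0 [Hbig _]] _] Hij HQ.
  destruct (Nat.leb_spec 1 (eta (i + j)%nat)) as [Hm|Hm].
  2:{ unfold W. replace (eta (i + j)%nat) with 0%nat by lia. simpl INR. ring. }
  assert (HmN : (i + j <= N)%nat).
  { destruct (Nat.le_gt_cases (i + j)%nat N); auto. rewrite Hbig in Hm; lia. }
  rewrite HQ by auto.
  assert (Hcm := ck_pos (i + j)%nat ltac:(lia)).
  destruct (eta (i + j)%nat) as [|e] eqn:Ee; [lia|].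
  destruct (Nat.eqb_spec i j) as [<-|Hne].
  -
    set (u1 := fun k => if k =? i then ck i * ck i / (INR (S (eta i)) * INR (S (S (eta i)))) else 1).
    set (u2 := fun k => if (k =? i + i)%nat then INR (S e) / ck (i + i)%nat else 1).
    assert (HP : PP N (split i i eta) = PP N eta * (ck i * ck i / (INR (S (eta i)) * INR (S (S (eta i))))) * (INR (S e) / ck (i + i)%nat)).
    { unfold PP. rewrite (Rprod_ext _ (fun k => hh k (eta k) * (u1 k * u2 k))).
      - rewrite Rprod_mult, Rprod_mult. unfold u1, u2.
        rewrite (Rprod_single _ _ i), (Rprod_single _ _ (i + i)%nat); try apply seq_NoDup; try (apply in_seq; lia).
        ring.
      - intros k Hk. apply in_seq in Hk. unfold u1, u2, split.
        destruct (Nat.eqb_spec k (i + i)%nat); destruct (Nat.eqb_spec k i); try lia; simpl ind.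
        + subst k. rewrite Ee. replace (S e - 1 + 0 + 0)%nat with e by lia.
          rewrite (hh_pred (i + i)%nat e) by lia. unfold Rdiv; ring.
        + subst k. replace (eta i - 0 + 1 + 1)%nat with (S (S (eta i))) by lia.
          rewrite !hh_S. assert (0 < INR (S (eta i))) by (apply lt_0_INR; lia).
          assert (0 < INR (S (S (eta i)))) by (apply lt_0_INR; lia).
          field. lra.
        + replace (eta k - 0 + 0 + 0)%nat with (eta k) by lia. ring. }
    rewrite HP. unfold rate, psi. rewrite Nat.eqb_refl.
    assert (Hs : split i i eta i = S (S (eta i))).
    { unfold split. rewrite (proj2 (Nat.eqb_neq i (i + i)%nat)) by lia. rewrite Nat.eqb_refl. simpl ind. lia. }
    rewrite Hs. replace (S (S (eta i)) - 1)%nat with (S (eta i)) by lia.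
    unfold W. rewrite Ee.
    assert (0 < INR (S (eta i))) by (apply lt_0_INR; lia).
    assert (0 < INR (S (S (eta i)))) by (apply lt_0_INR; lia).
    field. repeat split; lra.
  -
    set (u1 := fun k => if k =? i then ck i / INR (S (eta i)) else 1).
    set (u2 := fun k => if k =? j then ck j / INR (S (eta j)) else 1).
    set (u3 := fun k => if (k =? i + j)%nat then INR (S e) / ck (i + j)%nat else 1).
    assert (HP : PP N (split i j eta) = PP N eta * (ck i / INR (S (eta i))) * (ck j / INR (S (eta j))) * (INR (S e) / ck (i + j)%nat)).
    { unfold PP. rewrite (Rprod_ext _ (fun k => hh k (eta k) * (u1 k * (u2 k * u3 k)))).
      - rewrite !Rprod_mult. unfold u1, u2, u3.
        rewrite (Rprod_single _ _ i), (Rprod_single _ _ j), (Rprod_single _ _ (i + j)%nat);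
          try apply seq_NoDup; try (apply in_seq; lia).
        ring.
      - intros k Hk. apply in_seq in Hk. unfold u1, u2, u3, split.
        destruct (Nat.eqb_spec k (i + j)%nat); destruct (Nat.eqb_spec k i); destruct (Nat.eqb_spec k j);
          try lia; simpl ind.
        + subst k. rewrite Ee. replace (S e - 1 + 0 + 0)%nat with e by lia.
          rewrite (hh_pred (i + j)%nat e) by lia. unfold Rdiv; ring.
        + subst k. replace (eta i - 0 + 1 + 0)%nat with (S (eta i)) by lia.
          rewrite hh_S. assert (0 < INR (S (eta i))) by (apply lt_0_INR; lia). field. lra.
        + subst k. replace (eta j - 0 + 0 + 1)%nat with (S (eta j)) by lia.
          rewrite hh_S. assert (0 < INR (S (eta j))) by (apply lt_0_INR; lia). field. lra.
        + replace (eta k - 0 + 0 + 0)%nat with (eta k) by lia. ring. }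
    rewrite HP. unfold rate, psi. rewrite (proj2 (Nat.eqb_neq i j)) by auto.
    assert (Hsi : split i j eta i = S (eta i)).
    { unfold split. rewrite (proj2 (Nat.eqb_neq i (i + j)%nat)) by lia. rewrite Nat.eqb_refl.
      rewrite (proj2 (Nat.eqb_neq i j)) by lia. simpl ind. lia. }
    assert (Hsj : split i j eta j = S (eta j)).
    { unfold split. rewrite (proj2 (Nat.eqb_neq j (i + j)%nat)) by lia. rewrite Nat.eqb_refl.
      rewrite (proj2 (Nat.eqb_neq j i)) by lia. simpl ind. lia. }
    rewrite Hsi, Hsj. unfold W. rewrite Ee.
    assert (0 < INR (S (eta i))) by (apply lt_0_INR; lia).
    assert (0 < INR (S (eta j))) by (apply lt_0_INR; lia).
    field. repeat split; lra.
Qed.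

Lemma K2 v N r eta (Q : state -> R) Gc : in_Omega_r N r eta ->
  (forall i j, (1 <= i <= j)%nat -> (1 <= eta (i + j)%nat)%nat -> Q (split i j eta) = Gc * PP N (split i j eta)) ->
  inflow v N Q eta = Gc * PP N eta * v * (INR N - INR r).
Proof.
  intros Hr HQ. assert (Hr' := Hr). destruct Hr' as [[H0 [Hbig _]] _].
  unfold inflow.
  etransitivity.
  { apply (pairs_sum (fun i j => if (1 <=? eta (i + j)%nat)%nat then Q (split i j eta) * rate v (split i j eta) i j else 0)). }
  rewrite (sr_ext _ (fun i => sr (fun j => Gc * PP N eta * v * ((if i =? j then /2 else 1) * W eta i j)) i (N + 1 - i))).
  2:{ intros i Hi. apply sr_ext. intros j Hj. apply (termT v N r eta Q Gc i j Hr); [lia| intros Hm; apply HQ; [lia| exact Hm]]. }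
  rewrite (sr_ext _ (fun i => Gc * PP N eta * v * sr (fun j => (if i =? j then /2 else 1) * W eta i j) i (N + 1 - i)))
    by (intros; apply sr_scal).
  rewrite sr_scal, sym_sum.
  2:{ intros i j. unfold W. rewrite Nat.add_comm. unfold Rdiv; ring. }
  rewrite (sr_ext _ (fun i => sr (fun j => if (i + j <=? N)%nat then W eta i j else 0) 1 N)).
  2:{ intros i Hi. apply sr_ext. intros j Hj. destruct (Nat.leb_spec (i + j) N); [reflexivity|].
      unfold W. rewrite Hbig by lia. simpl INR. ring. }
  rewrite AD.
  rewrite (sr_ext _ (fun m => INR (eta m) * (2 * (INR m - 1)))).
  2:{ intros m Hm. rewrite <- (PM m) by lia.
      rewrite (sr_ext _ (fun i => INR (eta m) * (INR m / ck m) * (ck i * ck (m - i)%nat))).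
      - rewrite sr_scal. ring.
      - intros i Hi. unfold W. replace (i + (m - i))%nat with m by lia. unfold Rdiv; ring. }
  rewrite (sr_ext _ (fun m => 2 * (INR m * INR (eta m)) - 2 * INR (eta m))) by (intros; ring).
  rewrite sr_minus, !sr_scal, Omega_R by (exact (proj1 Hr)). rewrite (cnt_R N r eta Hr). field.
Qed.

Definition cnt N (eta : state) : nat := natsum (map eta (seq 1 N)).
Definition Gf v N r t : R := INR (fact N) * exp (- INR N * INR (r - 1) * v * t) *
  (1 - exp (- INR N * v * t)) ^ (N - r) / INR N ^ (N - r).
Definition Fm v N t (eta : state) : R := gibbs_formula v N (cnt N eta) eta t.

Lemma gibbs_eq v N r eta t : gibbs_formula v N r eta t = Gf v N r t * PP N eta.
Proof. reflexivity. Qed.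

Lemma dpl_expl a t : derivable_pt_lim (fun s => exp (a * s)) t (a * exp (a * t)).
Proof.
  assert (H := derivable_pt_lim_comp (fun s => a * s) exp t a (exp (a * t))).
  eapply dpl_ext; [| | apply H].
  - intros; reflexivity.
  - ring.
  - apply dpl_ext with (f := fun s => a * id s) (l := a * 1); [reflexivity| ring|].
    apply dpl_scal, derivable_pt_lim_id.
  - apply derivable_pt_lim_exp.
Qed.

Lemma dpl_xpow b d t : derivable_pt_lim (fun s => (1 - exp (b * s)) ^ d) t
   (INR d * (1 - exp (b * t)) ^ pred d * (- (b * exp (b * t)))).
Proof.
  assert (H := derivable_pt_lim_comp (fun s => 1 - exp (b * s)) (fun y => y ^ d) t
     (- (b * exp (b * t))) (INR d * (1 - exp (b * t)) ^ pred d)).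
  eapply dpl_ext; [| | apply H].
  - intros; reflexivity.
  - ring.
  - apply dpl_ext with (f := fun s => 1 - exp (b * s)) (l := 0 - b * exp (b * t)); [reflexivity| ring|].
    apply dpl_minus; [apply dpl_const| apply dpl_expl].
  - apply derivable_pt_lim_pow.
Qed.

Lemma G_deriv v N r t : (1 <= r <= N)%nat ->
  derivable_pt_lim (Gf v N r) t
    (- INR N * (INR r - 1) * v * Gf v N r t + (INR N - INR r) * v * Gf v N (S r) t).
Proof.
  intros Hr.
  assert (HN : 0 < INR N) by (apply lt_0_INR; lia).
  set (a := - INR N * INR (r - 1) * v). set (b := - INR N * v).
  set (K := INR (fact N) / INR N ^ (N - r)).
  assert (D := dpl_mult _ _ t _ _ (dpl_expl a t) (dpl_xpow b (N - r) t)).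
  apply (dpl_scal K) in D.
  eapply dpl_ext; [| | exact D].
  - intros s. unfold Gf, K, a, b. unfold Rdiv. ring.
  - unfold Gf, K, a, b. rewrite (minus_INR r 1) by lia. simpl INR.
    destruct (Nat.eq_dec r N) as [->|Hne].
    + rewrite Nat.sub_diag. simpl INR. simpl pow. unfold Rdiv. ring.
    + replace (N - r)%nat with (S (N - S r)) by lia. simpl pred.
      rewrite ?Nat.sub_0_r.
      rewrite <- !tech_pow_Rmult.
      replace (INR (S (N - S r))) with (INR N - INR r) by (rewrite S_INR, minus_INR by lia; rewrite S_INR; ring).
      replace (exp (- INR N * INR r * v * t)) with (exp (- INR N * (INR r - 1) * v * t) * exp (- INR N * v * t))
        by (rewrite <- exp_plus; f_equal; ring).
      assert (HNp : INR N ^ (N - S r) <> 0) by (apply pow_nonzero; lra).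
      field. split; lra.
Qed.

Lemma Fm_ODE v N r eta t : (1 <= r <= N)%nat -> in_Omega_r N r eta ->
  (forall i j, (1 <= i <= j)%nat -> (1 <= eta (i + j)%nat)%nat -> cnt N (split i j eta) = S r) ->
  derivable_pt_lim (fun s => gibbs_formula v N r eta s) t
    (inflow v N (Fm v N t) eta - gibbs_formula v N r eta t * outflow v N eta).
Proof.
  intros Hr HO Hc.
  rewrite (K2 v N r eta (Fm v N t) (Gf v N (S r) t) HO).
  2:{ intros i j Hij Hm. unfold Fm. rewrite Hc by auto. apply gibbs_eq. }
  rewrite (K1 v N r eta HO).
  eapply dpl_ext with (f := fun s => PP N eta * Gf v N r s); [intros; rewrite gibbs_eq; ring| |].
  2:{ apply dpl_scal. apply G_deriv. auto. }
  rewrite gibbs_eq. ring.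
Qed.

Lemma sr_le f g a n : (forall k, (a <= k < a + n)%nat -> f k <= g k) -> sr f a n <= sr g a n.
Proof.
  unfold sr. intros H. assert (H' : forall k, In k (seq a n) -> f k <= g k)
    by (intros k Hk; apply in_seq in Hk; auto).
  clear H. induction (seq a n); simpl; [lra|].
  assert (f a0 <= g a0) by (apply H'; left; auto).
  assert (Rsum (map f l) <= Rsum (map g l)) by (apply IHl; intros; apply H'; right; auto). lra.
Qed.

Lemma cnt_le N r eta : in_Omega_r N r eta -> (r <= N)%nat.
Proof.
  intros H. apply INR_le. rewrite <- (cnt_R N r eta H), <- (Omega_R N eta (proj1 H)).
  apply sr_le. intros k Hk. assert (1 <= INR k) by (apply (le_INR 1); lia).
  assert (0 <= INR (eta k)) by apply pos_INR. nra.
Qed.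

Lemma INR_ind b : INR (ind b) = if b then 1 else 0.
Proof. destruct b; reflexivity. Qed.

Lemma split_Omega N r eta i j : in_Omega_r N r eta -> (1 <= i <= j)%nat -> (1 <= eta (i + j)%nat)%nat ->
  in_Omega_r N (S r) (split i j eta).
Proof.
  intros Hr Hij Hm. assert (Hr' := Hr). destruct Hr' as [[H0 [Hbig HN]] Hc].
  assert (HmN : (i + j <= N)%nat).
  { destruct (Nat.le_gt_cases (i + j) N); auto. rewrite Hbig in Hm; lia. }
  assert (Hpt : forall k, INR (split i j eta k) = INR (eta k) - (if k =? i + j then 1 else 0)
                  + (if k =? i then 1 else 0) + (if k =? j then 1 else 0)).
  { intros k. rewrite <- !INR_ind.
    assert (E : (split i j eta k + ind (k =? i + j) = eta k + ind (k =? i) + ind (k =? j))%nat).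
    { unfold split. destruct (Nat.eqb_spec k (i + j)); simpl ind; [subst; lia| lia]. }
    apply (f_equal INR) in E. rewrite !plus_INR in E. lra. }
  split; [split; [|split]|].
  - unfold split. rewrite H0. destruct (Nat.eqb_spec 0 (i + j)), (Nat.eqb_spec 0 i), (Nat.eqb_spec 0 j); try lia.
    reflexivity.
  - intros k Hk. unfold split. rewrite Hbig by lia.
    destruct (Nat.eqb_spec k (i + j)), (Nat.eqb_spec k i), (Nat.eqb_spec k j); try lia. reflexivity.
  - apply INR_eq. rewrite INR_natsum.
    transitivity (sr (fun k => INR k * INR (eta k)) 1 N).
    2:{ rewrite Omega_R; [reflexivity| exact (proj1 Hr)]. }
    fold (sr (fun k => INR (k * split i j eta k)) 1 N).
    rewrite (sr_ext _ (fun k => INR k * INR (eta k) - (if k =? i + j then INR k else 0)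
        + (if k =? i then INR k else 0) + (if k =? j then INR k else 0))).
    2:{ intros k _. rewrite mult_INR, Hpt.
        destruct (k =? i + j), (k =? i), (k =? j); ring. }
    rewrite !sr_plus, sr_minus.
    rewrite (sr_single INR 1 N (i + j)) by lia.
    rewrite (sr_single INR 1 N i) by lia.
    rewrite (sr_single INR 1 N j) by lia.
    rewrite plus_INR. ring.
  - apply INR_eq. unfold cnt. rewrite INR_natsum. fold (sr (fun k => INR (split i j eta k)) 1 N).
    rewrite (sr_ext _ (fun k => INR (eta k) - (if k =? i + j then 1 else 0)
        + (if k =? i then 1 else 0) + (if k =? j then 1 else 0))) by (intros; apply Hpt).
    rewrite !sr_plus, sr_minus.
    rewrite (sr_single (fun _ => 1) 1 N (i + j)) by lia.
    rewrite (sr_single (fun _ => 1) 1 N i) by lia.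
    rewrite (sr_single (fun _ => 1) 1 N j) by lia.
    rewrite (cnt_R N r eta Hr). rewrite S_INR. ring.
Qed.

Lemma cnt_of N r eta : in_Omega_r N r eta -> cnt N eta = r.
Proof. intros [_ H]; exact H. Qed.

Lemma PP_init N : (1 <= N)%nat -> PP N (init N) = / INR (fact N).
Proof.
  intros HN. unfold PP. destruct N as [|N]; [lia|].
  simpl seq. simpl map. simpl Rprod.
  assert (E : Rprod (map (fun k => hh k (init (S N) k)) (seq 2 N)) = 1).
  { assert (Hx : forall k, In k (seq 2 N) -> hh k (init (S N) k) = 1).
    { intros k Hk. apply in_seq in Hk. unfold init. destruct (Nat.eqb_spec k 1); [lia|].
      unfold hh. rewrite Nat.mul_0_r. simpl. field. }
    induction (seq 2 N); simpl; [reflexivity|]. rewrite Hx by (left; auto).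
    rewrite IHl by (intros; apply Hx; right; auto). ring. }
  rewrite E. unfold hh, init. simpl Nat.eqb. simpl INR. rewrite pow1.
  rewrite Rmult_1_r. change (INR 1) with 1. rewrite pow1. change (fact N + N * fact N)%nat with (fact (S N)). field. apply INR_fact_neq_0.
Qed.


Lemma sr_nonneg_zero f a n : (forall k, (a <= k < a + n)%nat -> 0 <= f k) -> sr f a n = 0 ->
  forall k, (a <= k < a + n)%nat -> f k = 0.
Proof.
  unfold sr. intros H Hs k Hk. apply in_seq in Hk. revert Hk Hs.
  assert (H' : forall k, In k (seq a n) -> 0 <= f k) by (intros x Hx; apply in_seq in Hx; auto).
  clear H. induction (seq a n); simpl; [tauto|]. intros Hk Hs.
  assert (0 <= f a0) by (apply H'; left; auto).
  assert (0 <= Rsum (map f l)).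
  { clear IHl Hk Hs. induction l; simpl; [lra|].
    assert (0 <= f a1) by (apply H'; right; left; auto).
    assert (0 <= Rsum (map f l)) by (apply IHl; intros; apply H'; simpl in *; tauto). lra. }
  destruct Hk as [<-|Hk]; [lra|]. apply IHl; auto; [intros; apply H'; right; auto| lra].
Qed.

Lemma eta1_le N r eta : (1 <= N)%nat -> in_Omega_r N r eta -> (eta 1%nat <= r)%nat.
Proof.
  intros HN [_ Hc]. rewrite <- Hc. destruct N as [|N]; [lia|]. simpl. lia.
Qed.

Lemma full_is_init N eta : (1 <= N)%nat -> in_Omega_r N N eta -> eta = init N.
Proof.
  intros HN Hr. assert (Hr' := Hr). destruct Hr' as [[H0 [Hbig _]] _].
  assert (HO := Omega_R N eta (proj1 Hr)). assert (HC := cnt_R N N eta Hr).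
  assert (Hz : sr (fun k => (INR k - 1) * INR (eta k)) 1 N = 0).
  { rewrite (sr_ext _ (fun k => INR k * INR (eta k) - INR (eta k))) by (intros; ring).
    rewrite sr_minus, HO, HC. ring. }
  assert (Hk2 : forall k, (2 <= k <= N)%nat -> eta k = 0%nat).
  { intros k Hk.
    assert (Hnn : forall k, (1 <= k < 1 + N)%nat -> 0 <= (INR k - 1) * INR (eta k)).
    { intros x Hx. apply Rmult_le_pos; [|apply pos_INR].
      assert (1 <= INR x) by (apply (le_INR 1); lia). lra. }
    assert (E := sr_nonneg_zero _ _ _ Hnn Hz k ltac:(lia)).
    apply Rmult_integral in E. destruct E as [E|E].
    - assert (2 <= INR k) by (apply (le_INR 2); lia). lra.
    - apply INR_eq. exact E. }
  apply functional_extensionality. intros k. unfold init.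
  destruct (Nat.eqb_spec k 1) as [->|Hk1].
  - destruct N as [|N]; [lia|]. rewrite sr_cons in HC.
    rewrite sr_zero in HC by (intros k Hk; rewrite Hk2 by lia; reflexivity).
    apply INR_eq. lra.
  - destruct k as [|k]; [exact H0|].
    destruct (Nat.le_gt_cases (S k) N); [apply Hk2; lia| apply Hbig; lia].
Qed.

Lemma init_value v N r eta p : (1 <= N)%nat -> is_CP_law v N p -> (1 <= r <= N)%nat -> in_Omega_r N r eta ->
  p 0 eta = gibbs_formula v N r eta 0.
Proof.
  intros HN [_ [_ [Hp1 Hp0]]] Hr HO.
  destruct (Nat.eq_dec r N) as [->|Hne].
  - assert (E := full_is_init N eta HN HO). subst eta. rewrite Hp1.
    rewrite gibbs_eq, PP_init by auto. unfold Gf. rewrite Nat.sub_diag. simpl pow.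
    rewrite !Rmult_0_r, exp_0. field. apply INR_fact_neq_0.
  - rewrite Hp0; [| exact (proj1 HO)|].
    + unfold gibbs_formula. rewrite Rmult_0_r, exp_0. rewrite Rmult_0_r, exp_0, Rminus_diag, pow_i by lia. unfold Rdiv. ring.
    + exists 1%nat. unfold init. simpl. assert (H := eta1_le N r eta HN HO). lia.
Qed.

Lemma deriv0_const_pos f a : (forall y, a < y -> derivable_pt_lim f y 0) ->
  forall s t, a < s -> s <= t -> f s = f t.
Proof.
  intros H s t Hs Hst.
  assert (pr : forall x, s < x < t -> derivable_pt f x) by (intros x Hx; exists 0; apply H; lra).
  assert (C := null_derivative_loc f s t pr).
  symmetry. apply C; [| | lra].
  - intros x Hx. apply derivable_continuous_pt. exists 0; apply H; lra.
  - intros x P. apply derive_pt_eq_0. apply H. lra.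
Qed.

Lemma small_zero x : (forall eps, 0 < eps -> Rabs x < eps) -> x = 0.
Proof.
  intros H. destruct (Req_dec x 0) as [|Hx]; auto.
  assert (Hp := Rabs_pos_lt x Hx). specialize (H _ Hp). lra.
Qed.

Lemma core v N p : 0 < v -> (1 <= N)%nat -> is_CP_law v N p ->
  forall d r eta, (N - r = d)%nat -> (1 <= r <= N)%nat -> in_Omega_r N r eta ->
  forall t, 0 <= t -> p t eta = gibbs_formula v N r eta t.
Proof.
  intros Hv HN Hlaw d. induction d as [d IH] using lt_wf_ind.
  intros r eta Hd Hr HO.
  assert (Hc : forall i j, (1 <= i <= j)%nat -> (1 <= eta (i + j)%nat)%nat -> cnt N (split i j eta) = S r).
  { intros i j Hij Hm. apply cnt_of. apply split_Omega; auto. }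
  assert (HIH : forall s, 0 <= s -> inflow v N (p s) eta = inflow v N (Fm v N s) eta).
  { intros s Hs. unfold inflow. apply Rsum_ext. intros [i j] Hin. cbn [fst snd].
    apply In_pairs in Hin.
    destruct (Nat.leb_spec 1 (eta (i + j)%nat)) as [Hm|Hm]; [|reflexivity].
    assert (HS := split_Omega N r eta i j HO ltac:(lia) Hm).
    assert (HSN := cnt_le N (S r) _ HS).
    unfold Fm. rewrite (Hc i j) by (auto; lia).
    rewrite (IH (N - S r)%nat ltac:(lia) (S r) (split i j eta) eq_refl ltac:(lia) HS s Hs).
    reflexivity. }
  set (F := fun s => gibbs_formula v N r eta s).
  set (c := outflow v N eta).
  set (h := fun s => (p s eta - F s) * exp (c * s)).
  assert (Hh : forall y, 0 < y -> derivable_pt_lim h y 0).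
  { intros y Hy.
    assert (Dp := proj1 Hlaw eta (proj1 HO) y Hy).
    assert (DF := Fm_ODE v N r eta y Hr HO Hc).
    assert (D := dpl_mult _ _ y _ _ (dpl_minus _ _ y _ _ Dp DF) (dpl_expl c y)).
    eapply dpl_ext; [| | exact D].
    - intros; reflexivity.
    - rewrite HIH by lra. fold c. unfold F. ring. }
  assert (H0 := init_value v N r eta p HN Hlaw Hr HO).
  intros t Ht. destruct (Req_dec t 0) as [->|Htn]; [exact H0|].
  assert (Htp : 0 < t) by lra.
  assert (Hht : h t = 0).
  { apply small_zero. intros eps Heps.
    set (B := exp (Rabs c * t)). assert (HB : 0 < B) by apply exp_pos.
    assert (He2 : 0 < eps / (2 * B)) by (apply Rdiv_lt_0_compat; lra).
    destruct (proj1 (proj2 Hlaw) eta (proj1 HO) _ He2) as [d1 [Hd1 Hp1]].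
    assert (CF : continuity_pt F 0).
    { apply derivable_continuous_pt. eexists. apply (Fm_ODE v N r eta 0 Hr HO Hc). }
    destruct (CF _ He2) as [d2 [Hd2 Hp2]].
    set (s := Rmin t (Rmin (d1 / 2) (d2 / 2))).
    assert (Hs0 : 0 < s) by (unfold s; repeat apply Rmin_glb_lt; lra).
    assert (Hst : s <= t) by (unfold s; apply Rmin_l).
    assert (Hs1 : s < d1) by (unfold s; eapply Rle_lt_trans; [apply Rmin_r|]; eapply Rle_lt_trans; [apply Rmin_l| lra]).
    assert (Hs2 : s < d2) by (unfold s; eapply Rle_lt_trans; [apply Rmin_r|]; eapply Rle_lt_trans; [apply Rmin_r| lra]).
    rewrite <- (deriv0_const_pos h 0 Hh s t Hs0 Hst).
    assert (A1 := Hp1 s (conj Hs0 Hs1)).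
    assert (A2 : Rabs (F s - F 0) < eps / (2 * B)).
    { apply (Hp2 s). split; [split; [exact I| lra]|]. change (R_dist s 0 < d2). unfold R_dist. rewrite Rminus_0_r, Rabs_right; lra. }
    assert (Hex : exp (c * s) <= B).
    { unfold B.
      assert (c * s <= Rabs c * t).
      { apply Rle_trans with (Rabs c * s).
        - apply Rmult_le_compat_r; [lra| apply Rle_abs].
        - apply Rmult_le_compat_l; [apply Rabs_pos| lra]. }
      destruct (Req_dec (c * s) (Rabs c * t)) as [E|E]; [rewrite E; lra|].
      apply Rlt_le, exp_increasing. lra. }
    unfold h. rewrite Rabs_mult, (Rabs_right (exp _)) by (apply Rle_ge, Rlt_le, exp_pos).
    assert (Hdiff : Rabs (p s eta - F s) < eps / B).
    { replace (p s eta - F s) with ((p s eta - p 0 eta) - (F s - F 0)) by (unfold F in *; rewrite H0; ring).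
      eapply Rle_lt_trans; [apply Rabs_triang|]. rewrite Rabs_Ropp.
      replace (eps / B) with (eps / (2 * B) + eps / (2 * B)) by (field; lra). lra. }
    apply Rle_lt_trans with (Rabs (p s eta - F s) * B).
    - apply Rmult_le_compat_l; [apply Rabs_pos| exact Hex].
    - apply Rlt_le_trans with (eps / B * B); [apply Rmult_lt_compat_r; lra| right; field; lra]. }
  unfold h in Hht. apply Rmult_integral in Hht. destruct Hht as [Hht|Hht].
  - unfold F in *. cbv beta in *. lra.
  - exfalso. assert (Hp := exp_pos (c * t)). lra.
Qed.

Theorem mainTheorem4 (v : R) (N : nat) (p : R -> state -> R) :
  0 < v -> (1 <= N)%nat -> is_CP_law v N p ->
  forall (t : R) (r : nat) (eta : state),
    0 <= t -> (1 <= r <= N)%nat -> in_Omega_r N r eta ->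
    p t eta = gibbs_formula v N r eta t.
Proof.
  intros Hv HN Hlaw t r eta Ht Hr HO.
  exact (core v N p Hv HN Hlaw (N - r)%nat r eta eq_refl Hr HO t Ht).
Qed.
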